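(* Let $r\ge 2$ and $2\le s\le r$ be integers and let $H$ be a linear $r$-uniform hypergraph. Then \[ q(H)\le \frac{1}{\binom{r-1}{s-1}}\,q(\partial_s H). \] In particular, $(r-1)\,q(H)\le q(\partial H)$, where $q(\partial H)$ is the largest eigenvalue of the signless Laplacian matrix of the graph $\partial H$.
   Context: An $r$-uniform hypergraph ($r$-graph) $H$ has a finite vertex set $V(H)$ and a set $E(H)$ of $r$-element subsets of $V(H)$. It is linear if any two distinct edges share at most one vertex. $d_H(v)$ is the number of edges containing $v$. For an $r$-graph $H$ on $n$ vertices, its signless Laplacian spectral radius is \[ q(H)=\max_{\mathbf{x}\in\mathbb{R}^n,\ \|\mathbf{x}\|_r=1}\Big(\sum_{v\in V(H)}d_H(v)x_v^r + r\sum_{e\in E(H)}\prod_{v\in e}x_v\Big), \] where $\|\mathbf{x}\|_r=(\sum_v|x_v|^r)^{1/r}$. The $s$-shadow $\partial_s H$ is the $s$-graph on $V(H)$ whose edges are all $s$-subsets contained in some edge of $H$; $\partial H=\partial_2 H$ (a graph, for which $q$ coincides with the largest eigenvalue of $D+A$). *)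

(* Defs.v *)
From HB Require Import structures.
From mathcomp Require Import all_boot all_order all_algebra.
From mathcomp Require Import classical_sets reals.
Set Implicit Arguments. Unset Strict Implicit. Unset Printing Implicit Defensive.
Import Order.TTheory GRing.Theory Num.Theory.

Local Open Scope ring_scope.
Local Open Scope classical_set_scope.

(* A hypergraph on vertex set T is given by its edge set E : {set {set T}}. *)

Definition uniform (T : finType) (r : nat) (E : {set {set T}}) : Prop :=
  forall e, e \in E -> #|e| = r.

Definition linear_hg (T : finType) (E : {set {set T}}) : Prop :=
  forall e f, e \in E -> f \in E -> e != f -> (#|e :&: f| <= 1)%N.

Definition hdeg (T : finType) (E : {set {set T}}) (v : T) : nat :=
  #|[set e in E | v \in e]|.

Definition shadow (T : finType) (s : nat) (E : {set {set T}}) : {set {set T}} :=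
  [set S : {set T} | (#|S| == s) && [exists e in E, S \subset e]].

Definition qform (R : realType) (T : finType) (r : nat) (E : {set {set T}})
    (x : T -> R) : R :=
  \sum_(v : T) (hdeg E v)%:R * x v ^+ r + r%:R * \sum_(e in E) \prod_(v in e) x v.

(* signless Laplacian spectral radius of the r-graph E:
   maximum of qform over the unit sphere of the r-norm
   (||x||_r = 1  iff  sum_v |x_v|^r = 1). *)
Definition qrad (R : realType) (T : finType) (r : nat) (E : {set {set T}}) : R :=
  sup [set qform r E x | x in [set x : T -> R | \sum_(v : T) `|x v| ^+ r = 1]].

(* Main.v *)
Require Import Defs.
From HB Require Import structures.
From mathcomp Require Import all_boot all_order all_algebra.
From mathcomp Require Import classical_sets reals.
From mathcomp Require Import exp.
From mathcomp Require Import fintype finset.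
Import Order.TTheory GRing.Theory Num.Theory.
Local Open Scope ring_scope.

Lemma count_sub (T : finType) (e : {set T}) (v : T) (s : nat) :
  v \in e -> (1 <= s)%N ->
  #|[set S : {set T} | [&& S \subset e, #|S| == s & v \in S]]| = 'C(#|e|.-1, s.-1).
Proof.
move=> ve s1.
have -> : [set S : {set T} | [&& S \subset e, #|S| == s & v \in S]] =
  (fun A => v |: A) @: [set A : {set T} | A \subset e :\ v & #|A| == s.-1].
  apply/setP=> S; rewrite inE; apply/idP/idP.
  - case/and3P=> Se /eqP cS vS; apply/imsetP; exists (S :\ v).
      rewrite inE setSD //=; move: (cardsD1 v S); rewrite vS cS => ->.
      by rewrite add1n.
    by rewrite setD1K.
  - case/imsetP=> A; rewrite inE => /andP[Ae /eqP cA] ->.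
    have vA : v \notin A by apply/negP => /(subsetP Ae); rewrite !inE eqxx.
    rewrite subUset sub1set ve (subset_trans Ae (subsetDl _ _)) /=.
    rewrite cardsU1 vA cA add1n prednK // setU11 andbT //.
rewrite card_in_imset; last first.
  move=> A B; rewrite !inE => /andP[Ae _] /andP[Be _] eAB.
  have vA : v \notin A by apply/negP => /(subsetP Ae); rewrite !inE eqxx.
  have vB : v \notin B by apply/negP => /(subsetP Be); rewrite !inE eqxx.
  by rewrite -(setU1K vA) eAB setU1K.
rewrite cards_draws; congr 'C(_, _).
by move: (cardsD1 v e); rewrite ve add1n => ->.
Qed.
Section L.
Variable R : realType.
Variable T : finType.

Lemma hdeg_sum (F : {set {set T}}) (a : T -> R) :
  \sum_(v : T) (hdeg F v)%:R * a v = \sum_(S in F) \sum_(v in S) a v.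
Proof.
have -> : \sum_(v : T) (hdeg F v)%:R * a v =
          \sum_(v : T) \sum_(S in F | v \in S) a v.
  apply: eq_bigr => v _.
  rewrite (eq_bigl (fun S => S \in [set e in F | v \in e])); last first.
    by move=> S; rewrite inE.
  by rewrite sumr_const /hdeg mulr_natl.
rewrite (exchange_big_dep (fun S => S \in F)) /=; last by move=> ? ? _ /andP[].
by apply: eq_bigr => S SF; apply: eq_bigl => v; rewrite SF.
Qed.

Lemma sum_count (e : {set T}) (s : nat) (g : T -> R) : (1 <= s)%N ->
  \sum_(S : {set T} | (S \subset e) && (#|S| == s)) \sum_(v in S) g v
  = \sum_(v in e) g v *+ 'C(#|e|.-1, s.-1).
Proof.
move=> s1; rewrite (exchange_big_dep (fun v => v \in e)) /=; last first.
  by move=> S v /andP[/subsetP Se _] /Se.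
apply: eq_bigr => v ve.
rewrite (eq_bigl (fun S => S \in [set S : {set T} | [&& S \subset e, #|S| == s & v \in S]])); last first.
  by move=> S; rewrite inE andbA.
by rewrite sumr_const count_sub.
Qed.

Lemma prod_count (e : {set T}) (s : nat) (g : T -> R) : (1 <= s)%N ->
  \prod_(S : {set T} | (S \subset e) && (#|S| == s)) \prod_(v in S) g v
  = \prod_(v in e) g v ^+ 'C(#|e|.-1, s.-1).
Proof.
move=> s1; rewrite (exchange_big_dep (fun v => v \in e)) /=; last first.
  by move=> S v /andP[/subsetP Se _] /Se.
apply: eq_bigr => v ve.
rewrite (eq_bigl (fun S => S \in [set S : {set T} | [&& S \subset e, #|S| == s & v \in S]])); last first.
  by move=> S; rewrite inE andbA.
by rewrite prodr_const count_sub.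
Qed.

Lemma shadow_sum (E : {set {set T}}) (s : nat) (f : {set T} -> R) :
  (2 <= s)%N -> linear_hg E ->
  \sum_(S in shadow s E) f S =
  \sum_(e in E) \sum_(S : {set T} | (S \subset e) && (#|S| == s)) f S.
Proof.
move=> s2 lin.
rewrite (exchange_big_dep (fun S : {set T} => #|S| == s)) /=; last first.
  by move=> e S _ /andP[].
rewrite (eq_bigl (fun S : {set T} => (#|S| == s) && [exists e in E, S \subset e])); last first.
  by move=> S; rewrite inE.
rewrite big_mkcondr /=; apply: eq_bigr => S /eqP cS.
case: ifP => [/existsP[e0 /andP[e0E Se0]] | nex].
  rewrite (big_pred1 e0) // => e /=; rewrite cS eqxx andbT.
  apply/idP/eqP => [/andP[eE Se] | ->]; last by rewrite e0E Se0.
  apply/eqP; apply: contraTT s2 => ne; rewrite -ltnNge ltnS -cS.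
  apply: leq_trans (lin _ _ eE e0E ne); apply: subset_leq_card.
  by rewrite subsetI Se Se0.
rewrite big_pred0 // => e; apply/negbTE/negP => /andP[eE /andP[Se _]].
by move/negbT: nex; rewrite negb_exists => /forallP/(_ e); rewrite eE Se.
Qed.
End L.
Section E.
Variable R : realType.
Variable T : finType.

Lemma edge_ineq (e : {set T}) (r s : nat) (x y : T -> R) :
  (2 <= s)%N -> (s <= r)%N -> #|e| = r ->
  (forall v, 0 <= x v) -> (forall v, 0 <= y v) ->
  (forall v, y v ^+ s = x v ^+ r) ->
  ('C(r.-1, s.-1))%:R * (\sum_(v in e) x v ^+ r + r%:R * \prod_(v in e) x v)
  <= \sum_(S : {set T} | (S \subset e) && (#|S| == s))
        (\sum_(v in S) y v ^+ s + s%:R * \prod_(v in S) y v).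
Proof.
move=> s2 sr ce x0 y0 yx.
have s1 : (1 <= s)%N by apply: leq_trans s2.
set c := 'C(r.-1, s.-1); set N := 'C(r, s).
have hcN : (r * c = s * N)%N by rewrite /c mul_bin_diag prednK.
have N0 : (0 < N)%N by rewrite /N bin_gt0.
set A := [set S : {set T} | S \subset e & #|S| == s].
have eA : forall F : {set T} -> R,
    \sum_(S : {set T} | (S \subset e) && (#|S| == s)) F S = \sum_(S in A) F S.
  by move=> F; apply: eq_bigl => S; rewrite inE.
have cA : #|A| = N by rewrite /A cards_draws ce.
rewrite big_split /= -mulr_sumr.
rewrite sum_count // ce -/c.
have -> : \sum_(v in e) y v ^+ s *+ c = \sum_(v in e) x v ^+ r *+ c.
  by apply: eq_bigr => v _; rewrite yx.
rewrite sumrMnl mulrDr mulr_natl; apply: lerD => //.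
have ycx : forall v, y v ^+ c = x v ^+ N.
  move=> v; apply: (pexpIrn s1); rewrite ?unfold_in /= ?exprn_ge0 //.
  by rewrite -exprM mulnC exprM yx -exprM -exprM hcN mulnC.
have agm := leif_AGM (A := mem A) (E := fun S => \prod_(v in S) y v).
have := (agm _).1; rewrite cA => H.
have {H} H : (\prod_(v in e) x v) ^+ N <= ((\sum_(S in A) \prod_(v in S) y v) / N%:R) ^+ N.
  apply: le_trans (H _); last by move=> S _; apply: prodr_ge0.
  rewrite -prodrXl.
  have eP : \prod_(S in A) \prod_(v in S) y v = \prod_(S : {set T} | (S \subset e) && (#|S| == s)) \prod_(v in S) y v by apply: eq_bigl => S; rewrite inE.
  rewrite eP prod_count // ce -/c.
  by rewrite le_eqVlt; apply/orP; left; apply/eqP; apply: eq_bigr => v _; rewrite ycx.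
rewrite ler_pXn2r ?unfold_in //= ?prodr_ge0 // in H; last first.
  by rewrite divr_ge0 // sumr_ge0 // => S _; apply: prodr_ge0.
rewrite eA mulrA -natrM mulnC hcN natrM -mulrA ler_wpM2l //.
by rewrite -ler_pdivlMl ?ltr0n // mulrC.
Qed.
End E.
Section M.
Variable R : realType.
Variable T : finType.
Local Open Scope classical_set_scope.

Lemma qform_ub (t : nat) (F : {set {set T}}) (z : T -> R) :
  (1 <= t)%N -> \sum_(v : T) `|z v| ^+ t = 1 ->
  qform t F z <= \sum_(v : T) (hdeg F v)%:R + t%:R * #|F|%:R.
Proof.
move=> t1 hz.
have z1 : forall v, `|z v| <= 1.
  move=> v; rewrite -(expr_le1 (n:=t)) //; rewrite -hz (bigD1 v) //=.
  by rewrite lerDl sumr_ge0 // => i _; rewrite exprn_ge0.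
rewrite /qform; apply: lerD.
  apply: ler_sum => v _; rewrite -[X in _ <= X]mulr1; apply: ler_wpM2l => //.
  apply: le_trans (ler_norm _) _; rewrite normrX; exact: exprn_ile1.
apply: ler_wpM2l => //.
rewrite -[#|F|%:R]mulr1n -sumr_const; apply: ler_sum => S _.
apply: le_trans (ler_norm _) _; rewrite normr_prod; apply: prodr_ile1 => v _.
by rewrite normr_ge0 z1.
Qed.

Lemma has_sup_q (t : nat) (F : {set {set T}}) (z : T -> R) :
  (1 <= t)%N -> \sum_(v : T) `|z v| ^+ t = 1 ->
  has_sup [set qform t F x | x in [set x : T -> R | \sum_(v : T) `|x v| ^+ t = 1]].
Proof.
move=> t1 hz; split; first by exists (qform t F z); exists z.
exists (\sum_(v : T) (hdeg F v)%:R + t%:R * #|F|%:R) => _ [x hx <-].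
exact: qform_ub.
Qed.

Lemma qform_abs (t : nat) (F : {set {set T}}) (z : T -> R) :
  qform t F z <= qform t F (fun v => `|z v|).
Proof.
rewrite /qform; apply: lerD.
  apply: ler_sum => v _; apply: ler_wpM2l => //.
  by rewrite -normrX ler_norm.
apply: ler_wpM2l => //; apply: ler_sum => S _.
by rewrite -normr_prod ler_norm.
Qed.

Lemma qform_edges (t : nat) (F : {set {set T}}) (z : T -> R) :
  qform t F z = \sum_(e in F) (\sum_(v in e) z v ^+ t + t%:R * \prod_(v in e) z v).
Proof. by rewrite /qform hdeg_sum big_split /= mulr_sumr. Qed.

End M.
Section F.
Variable R : realType.
Variable T : finType.
Local Open Scope classical_set_scope.

Lemma key (r s : nat) (E : {set {set T}}) (x : T -> R) :
  (2 <= s)%N -> (s <= r)%N -> uniform r E -> linear_hg E ->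
  \sum_(v : T) `|x v| ^+ r = 1 ->
  qform r E x <= ('C(r.-1, s.-1))%:R^-1 * qrad R s (shadow s E).
Proof.
move=> s2 sr unif lin hx.
have s1 : (1 <= s)%N by apply: leq_trans s2.
have s0 : s%:R != 0 :> R by rewrite pnatr_eq0 -lt0n.
set xa := fun v => `|x v|.
set y := fun v => xa v `^ (r%:R / s%:R).
have y0 : forall v, 0 <= y v by move=> v; apply: powR_ge0.
have yx : forall v, y v ^+ s = xa v ^+ r.
  move=> v; rewrite -powR_mulrn // /y -powRrM divfK //.
  by rewrite powR_mulrn // /xa normr_ge0.
have hy : \sum_(v : T) `|y v| ^+ s = 1.
  by rewrite -hx; apply: eq_bigr => v _; rewrite ger0_norm // yx.
have c0 : (0 < 'C(r.-1, s.-1))%N by rewrite bin_gt0 -!subn1 leq_sub2r.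
apply: le_trans (qform_abs _ _ r E x) _.
rewrite ler_pdivlMl ?ltr0n //.
apply: le_trans (_ : qform s (shadow s E) y <= _); last first.
  apply: sup_upper_bound; last by exists y.
  have := has_sup_q R T s (shadow s E) y s1 hy. by [].
rewrite qform_edges qform_edges shadow_sum // mulr_sumr.
apply: ler_sum => e eE.
by apply: edge_ineq => //; exact: unif.
Qed.
End F.

Lemma part1 (R : realType) (T : finType) (r s : nat) (E : {set {set T}}) :
  (2 <= r)%N -> (2 <= s)%N -> (s <= r)%N ->
  uniform r E -> linear_hg E ->
  qrad R r E <= ('C(r.-1, s.-1))%:R^-1 * qrad R s (shadow s E).
Proof.
move=> r2 s2 sr unif lin.
have r0 : (0 < r)%N by apply: leq_trans r2.
case: (pickP (@predT T)) => [t _ | hT].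
  apply: ge_sup.
    pose d := fun v : T => if v == t then 1 else 0 : R.
    exists (qform r E d); exists d => //=.
    rewrite (bigD1 t) //= /d eqxx normr1 expr1n big1 ?addr0 // => v /negbTE ->.
    by rewrite normr0 expr0n gtn_eqF.
  move=> _ [x hx <-]; exact: key.
have e0 : forall t : nat,
    [set x : T -> R | \sum_(v : T) `|x v| ^+ t = 1]%classic = classical_sets.set0.
  move=> t; apply/seteqP; split => // x /=.
  by rewrite big_pred0 // => /eqP; rewrite eq_sym oner_eq0.
by rewrite /qrad !e0 !image_set0 sup0 mulr0.
Qed.

Theorem lemma8p1 (R : realType) (T : finType) (r s : nat) (E : {set {set T}}) :
  (2 <= r)%N -> (2 <= s)%N -> (s <= r)%N ->
  uniform r E -> linear_hg E ->
  qrad R r E <= ('C(r.-1, s.-1))%:R^-1 * qrad R s (shadow s E)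
  /\ (r.-1)%:R * qrad R r E <= qrad R 2 (shadow 2 E).
Proof.
move=> r2 s2 sr unif lin; split; first exact: part1.
have := part1 R T r 2 E r2 (leqnn 2) r2 unif lin.
have r1 : (0 < r.-1)%N by rewrite -subn1 subn_gt0.
rewrite bin1 => h; rewrite -ler_pdivlMl ?ltr0n //.
Qed.
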